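(* The structure $\mathcal{W}(I)$ is positive-model-complete in the signature $\{\cup,\cap,\bot,c_0,\min,\max,\mathrm{ips}\}$. That is, every first-order formula in this signature is equivalent in $\mathcal{W}(I)$ to a positive existential formula.
   Context: Let $I$ be a dense linear order with left endpoint $0$ and no right endpoint. $\mathcal{W}(I)$ is the structure whose universe is the set of finite subsets of $I$, interpreted as follows. - $\cup$ and $\cap$ are union and intersection. - $\bot$ is $\emptyset$, and $c_0$ is $\{0\}$. - $\min$ and $\max$ send a nonempty finite set to the singleton of its minimum, respectively maximum, and both fix $\emptyset$. - $\mathrm{ips}(A,B)=\{i\in A: s_A(i)\in B\}$, where $s_A$ is the successor function of the finite linear order $A$. A positive existential formula is one built from atomic formulas using only $\wedge$, $\vee$ and $\exists$. *)

(* Defs.v *)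
From HB Require Import structures.
From mathcomp Require Import all_boot all_order.
From mathcomp Require Import finmap.
Set Implicit Arguments. Unset Strict Implicit. Unset Printing Implicit Defensive.
Import Order.TTheory.
Local Open Scope order_scope.
Local Open Scope fset_scope.

Definition dense_lo_left0_noright {d : Order.disp_t} (I : orderType d) (z : I) : Prop :=
  [/\ (forall x : I, z <= x),
      (forall x y : I, x < y -> exists w : I, x < w /\ w < y)
    & (forall x : I, exists y : I, x < y)].

Section W.
Context {d : Order.disp_t} {I : orderType d}.

Definition Wsorted (A : {fset I}) : seq I := sort <=%O (enum_fset A).

Definition Wmin (A : {fset I}) : {fset I} :=
  if Wsorted A is x :: _ then [fset x] else fset0.
Definition Wmax (A : {fset I}) : {fset I} :=
  if Wsorted A is x :: s then [fset last x s] else fset0.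

(** successor of i in the finite linear order A (only meaningful for i in A
    that is not the maximum). *)
Definition Whas_succ (A : {fset I}) (i : I) : bool :=
  (index i (Wsorted A)).+1 < size (Wsorted A).
Definition Wsucc (A : {fset I}) (i : I) : I :=
  nth i (Wsorted A) (index i (Wsorted A)).+1.

Definition Wips (A B : {fset I}) : {fset I} :=
  [fset i in A | Whas_succ A i && (Wsucc A i \in B)].
End W.

(** Syntax of the signature {cup, cap, bot, c0, min, max, ips};
    variables are de Bruijn indices. *)
Inductive wterm : Type :=
  | TVar : nat -> wterm
  | TBot : wterm
  | TC0 : wterm
  | TCup : wterm -> wterm -> wterm
  | TCap : wterm -> wterm -> wterm
  | TMin : wterm -> wterm
  | TMax : wterm -> wterm
  | TIps : wterm -> wterm -> wterm.

Inductive wform : Type :=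
  | FEq : wterm -> wterm -> wform
  | FNot : wform -> wform
  | FAnd : wform -> wform -> wform
  | FOr : wform -> wform -> wform
  | FImp : wform -> wform -> wform
  | FEx : wform -> wform
  | FAll : wform -> wform.

Fixpoint pos_ex (f : wform) : bool :=
  match f with
  | FEq _ _ => true
  | FAnd f g | FOr f g => pos_ex f && pos_ex g
  | FEx f => pos_ex f
  | _ => false
  end.

Definition scons {T : Type} (a : T) (e : nat -> T) : nat -> T :=
  fun n => if n is n'.+1 then e n' else a.

Section Sem.
Context {d : Order.disp_t} {I : orderType d} (z : I).

Fixpoint teval (e : nat -> {fset I}) (t : wterm) : {fset I} :=
  match t with
  | TVar n => e n
  | TBot => fset0
  | TC0 => [fset z]
  | TCup t1 t2 => teval e t1 `|` teval e t2
  | TCap t1 t2 => teval e t1 `&` teval e t2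
  | TMin t1 => Wmin (teval e t1)
  | TMax t1 => Wmax (teval e t1)
  | TIps t1 t2 => Wips (teval e t1) (teval e t2)
  end.

Fixpoint holds (e : nat -> {fset I}) (f : wform) : Prop :=
  match f with
  | FEq t1 t2 => teval e t1 = teval e t2
  | FNot g => ~ holds e g
  | FAnd g h => holds e g /\ holds e h
  | FOr g h => holds e g \/ holds e h
  | FImp g h => holds e g -> holds e h
  | FEx g => exists a : {fset I}, holds (scons a e) g
  | FAll g => forall a : {fset I}, holds (scons a e) g
  end.
End Sem.

(* Main.v *)
Require Import Defs.
From HB Require Import structures.
From mathcomp Require Import all_boot all_order.
From mathcomp Require Import finmap.
From Stdlib Require Import Classical FunctionalExtensionality.
Set Implicit Arguments. Unset Strict Implicit. Unset Printing Implicit Defensive.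
Import Order.TTheory.
Local Open Scope order_scope.
Local Open Scope fset_scope.

Section Basics.
Context {d : Order.disp_t} {I : orderType d}.
Implicit Types (A B P : {fset I}).

Lemma Wsorted_lt A : sorted <%O (Wsorted A).
Proof. by rewrite /Wsorted sort_lt_sorted fset_uniq. Qed.

Lemma mem_Wsorted A x : (x \in Wsorted A) = (x \in A).
Proof. by rewrite /Wsorted mem_sort. Qed.

Lemma Wsorted_eq A (l : seq I) : sorted <%O l -> l =i A -> Wsorted A = l.
Proof.
move=> sl eq; apply: lt_sorted_eq => //; first exact: Wsorted_lt.
by move=> x; rewrite mem_Wsorted eq.
Qed.

Lemma Wsorted_inj A B : Wsorted A = Wsorted B -> A = B.
Proof. by move=> E; apply/fsetP => x; rewrite -!mem_Wsorted E. Qed.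

Lemma Wsorted_sub A P : A `<=` P -> Wsorted A = [seq x <- Wsorted P | x \in A].
Proof.
move=> /fsubsetP AP; apply: Wsorted_eq.
  by apply: sorted_filter; [exact: lt_trans| exact: Wsorted_lt].
by move=> x; rewrite mem_filter mem_Wsorted /=; case xA: (x \in A) => //=; rewrite AP.
Qed.

Lemma Wsorted_fset (l : seq I) : sorted <%O l -> Wsorted [fset x in l] = l.
Proof. by move=> sl; apply: Wsorted_eq => // x; rewrite in_fset. Qed.

End Basics.

Record rdfa := RDfa { rst : finType; rstep : seq bool -> rst -> rst; rs0 : rst; racc : pred rst }.
Arguments rstep : clear implicits. Arguments rs0 : clear implicits. Arguments racc : clear implicits.
Definition rrun (D : rdfa) (w : seq (seq bool)) := foldr (rstep D) (rs0 D) w.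
Definition rA D w := racc D (rrun D w).

Definition compl (D : rdfa) := @RDfa (rst D) (rstep D) (rs0 D) (fun q => ~~ racc D q).
Definition prodD (op : bool -> bool -> bool) (D1 D2 : rdfa) :=
  @RDfa (rst D1 * rst D2)%type (fun a q => (rstep D1 a q.1, rstep D2 a q.2))
     (rs0 D1, rs0 D2) (fun q => op (racc D1 q.1) (racc D2 q.2)).
Definition relab (idx : seq nat) (D : rdfa) :=
  @RDfa (rst D) (fun a q => rstep D (map (nth false a) idx) q) (rs0 D) (racc D).

Lemma rA_compl D w : rA (compl D) w = ~~ rA D w.
Proof. by []. Qed.

Lemma rrun_prod op D1 D2 w : rrun (prodD op D1 D2) w = (rrun D1 w, rrun D2 w).
Proof. by rewrite /rrun; elim: w => //= a w ->. Qed.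

Lemma rA_prod op D1 D2 w : rA (prodD op D1 D2) w = op (rA D1 w) (rA D2 w).
Proof. by rewrite /rA rrun_prod. Qed.

Lemma rA_relab idx D w : rA (relab idx D) w = rA D (map (fun a => map (nth false a) idx) w).
Proof.
rewrite /rA /rrun /=; congr (racc D _).
by elim: w => //= a w ->.
Qed.

Section Repr.
Context {d : Order.disp_t} {I : orderType d} (z : I).

Definition letter n (e : nat -> {fset I}) (p : I) : seq bool := [seq p \in e i | i <- iota 0 n].
Definition word n e (P : {fset I}) := map (letter n e) (Wsorted P).
Definition Rep n D (R : (nat -> {fset I}) -> Prop) :=
  forall e (P : {fset I}), z \in P -> (forall i, (i < n)%N -> e i `<=` P) ->
    (rA D (word n e P) <-> R e).

Lemma Rep_iff n D R R' : Rep n D R -> (forall e, R e <-> R' e) -> Rep n D R'.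
Proof. by move=> H E e P zP eP; rewrite -E; apply: H. Qed.

Lemma Rep_compl n D R : Rep n D R -> Rep n (compl D) (fun e => ~ R e).
Proof.
move=> H e P zP eP; rewrite rA_compl -(H e P zP eP).
by case: (rA D _) => //; split.
Qed.

Lemma Rep_prod n (op : bool -> bool -> bool) (Op : Prop -> Prop -> Prop) D1 D2 R1 R2 :
  (forall (b1 b2 : bool) (P1 P2 : Prop), (b1 <-> P1) -> (b2 <-> P2) -> (op b1 b2 <-> Op P1 P2)) ->
  Rep n D1 R1 -> Rep n D2 R2 -> Rep n (prodD op D1 D2) (fun e => Op (R1 e) (R2 e)).
Proof.
move=> Hop H1 H2 e P zP eP; rewrite rA_prod; apply: Hop; [exact: H1|exact: H2].
Qed.

Lemma iota_succ_map (T : Type) (f : nat -> T) m n :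
  [seq f i | i <- iota m.+1 n] = [seq f i.+1 | i <- iota m n].
Proof. by elim: n m => //= n IH m; rewrite IH. Qed.

Lemma letter_scons n a e p : letter n.+1 (scons a e) p = (p \in a) :: letter n e p.
Proof. by rewrite /letter /= iota_succ_map. Qed.

Lemma map_false (T : eqType) (f : T -> bool) (s : seq T) :
  (forall i, i \in s -> f i = false) -> map f s = nseq (size s) false.
Proof. by elim: s => //= a s IH H; rewrite H ?mem_head // IH // => i Hi; apply: H; rewrite in_cons Hi orbT. Qed.

Lemma letter_fresh n e (P : {fset I}) p : (forall i, (i < n)%N -> e i `<=` P) ->
  p \notin P -> letter n e p = nseq n false.
Proof.
move=> eP pP; rewrite /letter map_false ?size_iota // => i.
rewrite mem_iota add0n /= => /eP /fsubsetP sub; apply/negbTE; apply: contra pP; exact: sub.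
Qed.

Lemma letter_relab n e (idx : seq nat) p : all (fun j => (j < n)%N) idx ->
  map (nth false (letter n e p)) idx = letter (size idx) (fun i => e (nth 0%N idx i)) p.
Proof.
move=> /allP H; rewrite /letter.
rewrite -[in LHS](mkseq_nth 0%N idx) /mkseq -map_comp; apply/eq_in_map => i.
rewrite mem_iota add0n /= => iS.
have Hn : (nth 0%N idx i < n)%N by apply: H; rewrite mem_nth.
by rewrite (nth_map 0%N) ?size_iota // nth_iota.
Qed.

Lemma Rep_relab m n (idx : seq nat) D R : size idx = m -> all (fun j => (j < n)%N) idx ->
  Rep m D R -> Rep n (relab idx D) (fun e => R (fun i => e (nth 0%N idx i))).
Proof.
move=> sz al H e P zP eP; rewrite rA_relab.
have -> : map (fun a => map (nth false a) idx) (word n e P) = word m (fun i => e (nth 0%N idx i)) P.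
  rewrite /word -map_comp; apply: eq_map => p /=; rewrite -sz; exact: letter_relab.
apply: H => // i; rewrite -sz => ii; apply: eP; apply: (allP al); exact: mem_nth.
Qed.

End Repr.

Definition mk3 (S : finType) (f : bool -> bool -> bool -> S -> S) (s0 : S) (acc : pred S) :=
  @RDfa S (fun a q => f (nth false a 0) (nth false a 1) (nth false a 2) q) s0 acc.

Section ListSpecs.
Context {T : eqType}.
Implicit Types (x y zz : pred T) (t u v : seq T).

Lemma cons_neq (p : T) u v : p \notin v -> (p :: u == v) = false.
Proof. by move=> pv; apply/negbTE; apply: contraNneq pv => <-; rewrite mem_head. Qed.

Lemma neq_cons (p : T) u v : p \notin u -> (u == p :: v) = false.
Proof. by move=> pv; rewrite eq_sym cons_neq. Qed.

Lemma cons_if_eq (p : T) (b1 b2 : bool) u v : p \notin u -> p \notin v ->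
  ((if b1 then p :: u else u) == (if b2 then p :: v else v)) = (b1 == b2) && (u == v).
Proof.
by move=> pu pv; case: b1; case: b2 => //=; rewrite ?eqseq_cons ?eqxx ?cons_neq ?neq_cons.
Qed.

Fixpoint ipsl zz t := match t with
  | a :: ((b :: _) as t') => if zz b then a :: ipsl zz t' else ipsl zz t'
  | _ => [::] end.

Lemma ipsl_sub zz t : {subset ipsl zz t <= t}.
Proof.
elim: t => // a [|b t] IH //= q.
case: (zz b) => [|/IH]; rewrite ?in_cons; last by move=> ->; rewrite orbT.
by case/orP=> [->//|/IH]; rewrite in_cons => ->; rewrite orbT.
Qed.

Definition fY y zz t := if filter y t is b :: _ then Some (zz b) else None.

Lemma ipsl_cons zz p t :
  ipsl zz (p :: t) = if (if t is b :: _ then Some (zz b) else None) == Some true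
                     then p :: ipsl zz t else ipsl zz t.
Proof. by case: t => // b t /=; case: (zz b). Qed.

Definition lastl t := if t is a :: l then [:: last a l] else [::].

Lemma foldr_local (g : bool -> bool -> bool) x y zz t :
  foldr (fun p (A : bool) => (x p == g (y p) (zz p)) && A) true t =
  all (fun p => x p == g (y p) (zz p)) t.
Proof. by elim: t => //= p t ->. Qed.

Lemma foldr_c0 x t : uniq t ->
  foldr (fun p (q : bool * bool) => (x p && q.2, ~~ x p && q.2)) (true, true) t =
  (filter x t == take 1 t, filter x t == [::]).
Proof.
elim: t => //= p t IH /andP[pt ut]; rewrite IH //=.
have pfx : p \notin filter x t by rewrite mem_filter (negbTE pt) andbF.
by case: (x p) => /=; rewrite ?take0 ?eqseq_cons ?eqxx ?neq_cons.
Qed.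

Lemma foldr_min x y t : uniq t ->
  foldr (fun p (q : bool * bool) => (if y p then x p && q.2 else ~~ x p && q.1, ~~ x p && q.2))
     (true, true) t =
  (filter x t == take 1 (filter y t), filter x t == [::]).
Proof.
elim: t => //= p t IH /andP[pt ut]; rewrite IH //=.
have pfx : p \notin filter x t by rewrite mem_filter (negbTE pt) andbF.
have pfy : p \notin take 1 (filter y t).
  by apply: contra pt => /mem_take; rewrite mem_filter => /andP[].
case: (y p); case: (x p) => //=; rewrite ?take0 ?eqseq_cons ?eqxx ?neq_cons ?cons_neq //.
Qed.

Lemma foldr_max x y t : uniq t ->
  foldr (fun p (q : bool * bool) => ((if q.2 then ~~ x p else x p == y p) && q.1, y p || q.2))
     (true, false) t =
  (filter x t == lastl (filter y t), has y t).
Proof.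
elim: t => //= p t IH /andP[pt ut]; rewrite IH //=.
have pfx : p \notin filter x t by rewrite mem_filter (negbTE pt) andbF.
rewrite has_filter; case E: (filter y t) => [|a l] /=.
  by case: (y p); case: (x p) => //=; rewrite ?eqseq_cons ?eqxx ?neq_cons ?cons_neq.
have pl : p \notin [:: last a l].
  rewrite mem_seq1; apply: contra pt => /eqP ->.
  have : last a l \in filter y t by rewrite E mem_last.
  by rewrite mem_filter => /andP[].
by case: (y p); case: (x p) => //=; rewrite ?cons_neq.
Qed.

Lemma foldr_ips x y zz t : uniq t ->
  foldr (fun p (q : option bool * bool) =>
     (if y p then Some (zz p) else q.1, (x p == (y p && (q.1 == Some true))) && q.2))
     (None, true) t =
  (fY y zz t, filter x t == ipsl zz (filter y t)).
Proof.
elim: t => //= p t IH /andP[pt ut]; rewrite IH //= /fY /=.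
have pfx : p \notin filter x t by rewrite mem_filter (negbTE pt) andbF.
have pfi : p \notin ipsl zz (filter y t).
  by apply: contra pt => /ipsl_sub; rewrite mem_filter => /andP[].
case: (y p) => /=.
  move: pfi; case: [seq x <- t | y x] => [|b l] pfi /=.
    by case: (x p) => //=.
  by case: (zz b) => /=; case: (x p) => //=; rewrite ?eqseq_cons ?eqxx ?cons_neq ?neq_cons.
by case: (x p) => //=; rewrite ?cons_neq.
Qed.

End ListSpecs.

Section SetSpecs.
Context {d : Order.disp_t} {I : orderType d}.
Implicit Types (X Y Z W P : {fset I}).

Lemma Wsorted0 : Wsorted (fset0 : {fset I}) = [::].
Proof. by apply: Wsorted_eq. Qed.

Lemma Wsorted1 (a : I) : Wsorted [fset a] = [:: a].
Proof. by apply: Wsorted_eq => // x; rewrite in_fset1 mem_seq1. Qed.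

Lemma Wsorted_min Y : Wsorted (Wmin Y) = take 1 (Wsorted Y).
Proof. by rewrite /Wmin; case: (Wsorted Y) => [|a l] /=; rewrite ?Wsorted0 ?Wsorted1 ?take0. Qed.

Lemma Wsorted_max Y : Wsorted (Wmax Y) = lastl (Wsorted Y).
Proof. by rewrite /Wmax; case: (Wsorted Y) => [|a l] /=; rewrite ?Wsorted0 ?Wsorted1. Qed.

Lemma filter_ips Z (l : seq I) : uniq l ->
  [seq i <- l | ((index i l).+1 < size l)%N && (nth i l (index i l).+1 \in Z)] =
  ipsl (fun b => b \in Z) l.
Proof.
elim: l => // a l IH /= /andP[al ul]; rewrite eqxx /=.
rewrite (@eq_in_filter _ _ (fun i => ((index i l).+1 < size l)%N && (nth i l (index i l).+1 \in Z))); last first.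
  by move=> i il; rewrite /=; case: eqP => [E|_] //; move: al; rewrite E il.
rewrite IH //; case: l {IH al ul} => //= b l.
Qed.

Lemma Wsorted_ips Y Z : Wsorted (Wips Y Z) = ipsl (fun b => b \in Z) (Wsorted Y).
Proof.
rewrite -filter_ips; last exact: lt_sorted_uniq (Wsorted_lt Y).
apply: Wsorted_eq.
  by apply: sorted_filter; [exact: lt_trans| exact: Wsorted_lt].
move=> x; rewrite mem_filter /Wips !inE mem_Wsorted andbC.
by rewrite /Whas_succ /Wsucc.
Qed.

Lemma eq_via_sorted X W P : X `<=` P ->
  (X = W <-> [seq x <- Wsorted P | x \in X] = Wsorted W).
Proof.
move=> XP; rewrite -Wsorted_sub //; split; first by move->.
exact: Wsorted_inj.
Qed.

Lemma Wsorted_head (z : I) P : z \in P -> (forall x : I, z <= x) ->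
  Wsorted P = z :: behead (Wsorted P).
Proof.
rewrite -mem_Wsorted; have := Wsorted_lt P.
case: (Wsorted P) => // a l /= sl; rewrite in_cons => /orP[/eqP->//|zl] Hz.
have := order_path_min lt_trans sl => /allP /(_ z zl) az.
by have := Hz a; rewrite leNgt az.
Qed.

End SetSpecs.

Definition Dloc (g : bool -> bool -> bool) :=
  @mk3 bool (fun x y zz A => (x == g y zz) && A) true id.
Definition Dc0 := @mk3 (bool * bool)%type (fun x _ _ q => (x && q.2, ~~ x && q.2)) (true, true) fst.
Definition Dmin := @mk3 (bool * bool)%type
  (fun x y _ q => (if y then x && q.2 else ~~ x && q.1, ~~ x && q.2)) (true, true) fst.
Definition Dmax := @mk3 (bool * bool)%type
  (fun x y _ q => ((if q.2 then ~~ x else x == y) && q.1, y || q.2)) (true, false) fst.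
Definition Dips := @mk3 (option bool * bool)%type
  (fun x y zz q => (if y then Some zz else q.1, (x == (y && (q.1 == Some true))) && q.2))
  (None, true) snd.

Section BasicRepr.
Context {d : Order.disp_t} {I : orderType d} (z : I) (Hz : forall x : I, z <= x).

Lemma rA_mk3 (S : finType) f (s0 : S) acc e (P : {fset I}) :
  rA (mk3 f s0 acc) (word 3 e P) =
  acc (foldr (fun p q => f (p \in e 0%N) (p \in e 1%N) (p \in e 2%N) q) s0 (Wsorted P)).
Proof. by rewrite /rA /rrun /word foldr_map. Qed.

Lemma Rep_loc (g : bool -> bool -> bool) (W : {fset I} -> {fset I} -> {fset I}) :
  g false false = false -> (forall Y Z p, (p \in W Y Z) = g (p \in Y) (p \in Z)) ->
  Rep z 3 (Dloc g) (fun e => e 0%N = W (e 1%N) (e 2%N)).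
Proof.
move=> g0 HW e P zP eP; rewrite rA_mk3 /= foldr_local; split.
  move=> /allP H; apply/fsetP => p; rewrite HW.
  case pP: (p \in P); first by apply/eqP; apply: H; rewrite mem_Wsorted.
  have nP : forall i, (i < 3)%N -> (p \in e i) = false.
    by move=> i /eP /fsubsetP S; apply/negbTE; apply: contraFN pP; apply: S.
  by rewrite !nP.
by move=> ->; apply/allP => p _; rewrite HW.
Qed.

Lemma uniqW (P : {fset I}) : uniq (Wsorted P).
Proof. exact: lt_sorted_uniq (Wsorted_lt P). Qed.

Lemma Rep_c0 : Rep z 3 Dc0 (fun e => e 0%N = [fset z]).
Proof.
move=> e P zP eP; rewrite rA_mk3 foldr_c0 ?uniqW //=.
rewrite (eq_via_sorted _ (eP 0%N isT)) Wsorted1 [in take _ _](Wsorted_head zP Hz) /=.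
by rewrite take0; split => /eqP.
Qed.

Lemma Rep_min : Rep z 3 Dmin (fun e => e 0%N = Wmin (e 1%N)).
Proof.
move=> e P zP eP; rewrite rA_mk3 foldr_min ?uniqW //=.
rewrite (eq_via_sorted _ (eP 0%N isT)) Wsorted_min (Wsorted_sub (eP 1%N isT)).
by split => /eqP.
Qed.

Lemma Rep_max : Rep z 3 Dmax (fun e => e 0%N = Wmax (e 1%N)).
Proof.
move=> e P zP eP; rewrite rA_mk3 foldr_max ?uniqW //=.
rewrite (eq_via_sorted _ (eP 0%N isT)) Wsorted_max (Wsorted_sub (eP 1%N isT)).
by split => /eqP.
Qed.

Lemma Rep_ips : Rep z 3 Dips (fun e => e 0%N = Wips (e 1%N) (e 2%N)).
Proof.
move=> e P zP eP; rewrite rA_mk3 foldr_ips ?uniqW //=.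
rewrite (eq_via_sorted _ (eP 0%N isT)) Wsorted_ips (Wsorted_sub (eP 1%N isT)).
by split => /eqP.
Qed.

End BasicRepr.

Definition ins n : seq bool := true :: nseq n false.

Section ExAut.
Variable (D : rdfa) (n : nat).
Definition Clo (S : {set rst D}) : {set rst D} :=
  [set q' | [exists q in S, fconnect (rstep D (ins n)) q q']].
Definition exStep (a : seq bool) (S : {set rst D}) : {set rst D} :=
  [set q | [exists c : bool, exists q' in Clo S, q == rstep D (c :: a) q']].
Definition exD := @RDfa {set rst D}%type exStep [set rs0 D] (fun S => [exists q in S, racc D q]).

Lemma Clo_sub (S : {set rst D}) q : q \in S -> q \in Clo S.
Proof. by move=> qS; rewrite inE; apply/existsP; exists q; rewrite qS connect0. Qed.

Lemma Clo_step (S : {set rst D}) q : q \in Clo S -> rstep D (ins n) q \in Clo S.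
Proof.
rewrite !inE => /existsP[q0 /andP[q0S c]]; apply/existsP; exists q0; rewrite q0S /=.
by apply: connect_trans c _; apply: connect1; rewrite /= eqxx.
Qed.

Lemma Clo_inv (S : {set rst D}) q : q \in Clo S -> exists k q0, q0 \in S /\ q = iter k (rstep D (ins n)) q0.
Proof.
rewrite inE => /existsP[q0 /andP[q0S c]]; exists (findex (rstep D (ins n)) q0 q), q0.
by rewrite iter_findex.
Qed.

Lemma exStepP a (S : {set rst D}) q :
  reflect (exists c q', q' \in Clo S /\ q = rstep D (c :: a) q') (q \in exStep a S).
Proof.
rewrite inE; apply: (iffP existsP) => [[c /existsP[q' /andP[H /eqP ->]]]|[c [q' [H ->]]]].
  by exists c, q'.
by exists c; apply/existsP; exists q'; rewrite H eqxx.
Qed.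
End ExAut.
Arguments exStep : clear implicits. Arguments Clo : clear implicits. Arguments exD : clear implicits.

Section ExRepr.
Context {d : Order.disp_t} {I : orderType d} (z : I)
  (Hdense : forall x y : I, x < y -> exists w : I, x < w /\ w < y)
  (Hright : forall x : I, exists y : I, x < y).

Definition below (ub : option I) (w : I) := if ub is Some y then w < y else true.

Lemma pts (x : I) ub k : below ub x ->
  exists N : seq I, [/\ size N = k, path <%O x N & all (below ub) N].
Proof.
elim: k x => [|k IH] x bx; first by exists [::].
have [w [xw bw]] : exists w, x < w /\ below ub w.
  clear IH; move: bx; case: ub => [y|] /= bx; first exact: Hdense.
  by have [w xw] := Hright x; exists w.
have [N [sN pN aN]] := IH w bw.
by exists (w :: N); rewrite /= sN xw pN bw aN.
Qed.

Lemma fresh_between (P : {fset I}) pre x s' w : pre ++ x :: s' = Wsorted P ->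
  x < w -> below (ohead s') w -> w \notin P.
Proof.
move=> E xw bw; rewrite -mem_Wsorted -E; apply/negP.
have := Wsorted_lt P; rewrite -E lt_sorted_pairwise pairwise_cat pairwise_cons.
case/and4P => /allrelP Hpre _ /allP Hx Hs'.
rewrite mem_cat in_cons => /or3P[/Hpre H|/eqP E'|ws'].
- by have := H x (mem_head _ _); rewrite ltNge ltW.
- by move: xw; rewrite E' ltxx.
- clear E Hpre; case: s' Hx Hs' bw ws' => // y s'' Hx /= /andP[/allP Hy _] wy.
  rewrite in_cons => /orP[/eqP E'|/Hy yw]; first by move: wy; rewrite E' ltxx.
  by move: wy; rewrite ltNge ltW.
Qed.

Lemma uniq_fst (t : seq (I * bool)) pb pb' : uniq (map fst t) -> pb \in t -> pb' \in t ->
  pb.1 = pb'.1 -> pb = pb'.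
Proof.
elim: t => // c t IH /= /andP[ct ut]; rewrite !in_cons.
case/orP=> [/eqP->|pt]; case/orP=> [/eqP->|p't] //= E.
- by move: ct; rewrite E (map_f fst p't).
- by move: ct; rewrite -E (map_f fst pt).
- exact: IH.
Qed.

Section Work.
Variables (D : rdfa) (n : nat) (e : nat -> {fset I}) (P : {fset I}).
Hypothesis eP : forall i, (i < n)%N -> e i `<=` P.
Definition SS (s : seq I) := foldr (exStep D n) [set rs0 D] (map (letter n e) s).

Lemma back (a : {fset I}) t : (forall p, p \in t -> p \notin P -> p \in a) ->
  foldr (rstep D) (rs0 D) (map (fun p => (p \in a) :: letter n e p) t)
    \in Clo D n (SS [seq p <- t | p \in P]).
Proof.
elim: t => [|p t IH] H /=; first by apply: Clo_sub; rewrite inE.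
have H' : forall q, q \in t -> q \notin P -> q \in a by move=> q qt; apply: H; rewrite in_cons qt orbT.
have IH' := IH H'.
case pP: (p \in P).
  apply: Clo_sub; rewrite /SS /=; apply/exStepP.
  by exists (p \in a), (foldr (rstep D) (rs0 D) (map (fun p => (p \in a) :: letter n e p) t)).
rewrite (H p (mem_head _ _) (negbT pP)) (letter_fresh eP (negbT pP)); exact: Clo_step IH'.
Qed.

Lemma back_top (a : {fset I}) p t : p \in P -> (forall q, q \in t -> q \notin P -> q \in a) ->
  foldr (rstep D) (rs0 D) (map (fun p => (p \in a) :: letter n e p) (p :: t))
    \in SS [seq q <- p :: t | q \in P].
Proof.
move=> pP H; rewrite /= pP /SS /=; apply/exStepP.
by exists (p \in a), (foldr (rstep D) (rs0 D) (map (fun p => (p \in a) :: letter n e p) t)); split => //; apply: back.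
Qed.

Lemma iter_fresh (N : seq I) b : (forall w, w \in N -> w \notin P) ->
  foldr (rstep D) b (map (fun pb : I * bool => pb.2 :: letter n e pb.1) [seq (w, true) | w <- N])
  = iter (size N) (rstep D (ins n)) b.
Proof.
elim: N => //= w N IH H; rewrite IH; last by move=> v vN; apply: H; rewrite in_cons vN orbT.
by rewrite (letter_fresh eP (H w (mem_head _ _))).
Qed.

Lemma fwd s : forall pre q, pre ++ s = Wsorted P -> q \in SS s ->
  exists t : seq (I * bool),
  [/\ q = foldr (rstep D) (rs0 D) (map (fun pb => pb.2 :: letter n e pb.1) t),
      sorted <%O (map fst t),
      {subset s <= map fst t},
      (forall pb, pb \in t -> pb.1 \notin s -> pb.1 \notin P /\ pb.2) &
      (forall pb, pb \in t -> if s is y :: _ then y <= pb.1 else False)].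
Proof.
elim: s => [|x s' IH] pre q Es.
  by rewrite /SS /= inE => /eqP ->; exists [::].
rewrite /SS /= => /exStepP [c [q' [q'C ->]]].
have [k [q'' [q''S ->]]] := Clo_inv q'C.
have Es' : rcons pre x ++ s' = Wsorted P by rewrite cat_rcons.
have [t' [Eq' st' sub' fr' ge']] := IH _ _ Es' q''S.
have sxs : path <%O x s'.
  by have := Wsorted_lt P; rewrite -Es => /cat_sorted2 [].
have bx : below (ohead s') x by case: (s') sxs => //= y ? /andP[].
have [N [sN pN aN]] := pts k bx.
have Nfresh : forall w, w \in N -> w \notin P.
  move=> w wN; apply: (fresh_between Es).
    by move: pN; rewrite (path_sortedE lt_trans) => /andP[/allP /(_ w wN)].
  exact: (allP aN).
exists ((x, c) :: [seq (w, true) | w <- N] ++ t'); split.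
- by rewrite map_cons map_cat /= foldr_cat -Eq' iter_fresh // sN.
- rewrite /= map_cat -map_comp map_id (path_sortedE lt_trans) all_cat lt_sorted_pairwise pairwise_cat.
  rewrite -!lt_sorted_pairwise st' andbT.
  move: pN; rewrite (path_sortedE lt_trans) => /andP[xN ->]; rewrite xN /= andbT.
  case: (s') sxs ge' aN => [|y s''] /= sxs ge' aN.
    by case: (t') ge' => //= pb ? /(_ pb (mem_head _ _)).
  move: sxs => /andP[xy _]; apply/andP; split.
    by apply/allP => v /mapP [pb pbt ->]; apply: lt_le_trans xy (ge' pb pbt).
  apply/allrelP => w v wN /mapP [pb pbt ->]; apply: lt_le_trans (ge' pb pbt).
  exact: (allP aN).
- move=> v; rewrite in_cons => /orP[/eqP->|vs']; first exact: mem_head.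
  by rewrite /= in_cons map_cat mem_cat sub' ?orbT.
- move=> pb; rewrite in_cons mem_cat => /or3P[/eqP->|/mapP[w wN ->]|pbt].
  + by rewrite /= mem_head.
  + by move=> _; rewrite Nfresh.
  + by rewrite in_cons negb_or => /andP[_ /(fr' pb pbt)].
- move=> pb; rewrite in_cons mem_cat => /or3P[/eqP->|/mapP[w wN ->]|pbt] //=.
  + by move: pN; rewrite (path_sortedE lt_trans) => /andP[/allP /(_ w wN) /ltW].
  + move: (ge' pb pbt); case: (s') sxs => //= y ? /andP[xy _] yp.
    by apply: le_trans yp; apply: ltW.
Qed.

End Work.

Hypothesis Hz : forall x : I, z <= x.

Lemma Rep_ex n D R : Rep z n.+1 D R -> Rep z n (exD D n) (fun e => exists a, R (scons a e)).
Proof.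
move=> HR e P zP eP; rewrite /rA /rrun /=; split.
  move=> /existsP[q /andP[qS qacc]].
  have [t [Eq st sub fr ge]] := @fwd D n e P eP (Wsorted P) [::] q erefl qS.
  pose a : {fset I} := [fset w in [seq pb.1 | pb <- t & pb.2]].
  pose P' : {fset I} := [fset w in map fst t].
  have subP : forall p, p \in P -> p \in P'.
    by move=> p pP; rewrite in_fset /= sub // mem_Wsorted.
  exists a; apply/(HR _ P').
  - exact: subP.
  - case=> [|i] /= Hi; apply/fsubsetP => w.
      rewrite !in_fset /= => /mapP [pb]; rewrite mem_filter => /andP[_ pbt] ->.
      exact: map_f.
    by move/(fsubsetP (eP i Hi)); apply: subP.
  rewrite /rA /word Wsorted_fset // -map_comp.
  have -> : map (letter n.+1 (scons a e) \o fst) t = map (fun pb => pb.2 :: letter n e pb.1) t.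
    apply/eq_in_map => pb pbt /=; rewrite letter_scons; congr (_ :: _).
    rewrite in_fset /=; case lab: pb.2.
      by apply/mapP; exists pb => //; rewrite mem_filter lab pbt.
    apply/negbTE/negP => /mapP [pb']; rewrite mem_filter => /andP[lab' pb't] E.
    have E' := uniq_fst (lt_sorted_uniq st) pbt pb't E.
    by move: lab; rewrite E' lab'.
  by rewrite /rrun -Eq.
move=> [a Ra].
pose P' := P `|` a.
have PP' : P `<=` P' by apply: fsubsetUl.
have zP' : z \in P' by rewrite in_fsetU zP.
have HP' : rA D (word n.+1 (scons a e) P').
  apply/(HR _ P') => //; case=> [|i] /= Hi; first exact: fsubsetUr.
  exact: fsubset_trans (eP i Hi) PP'.
apply/existsP; exists (rrun D (word n.+1 (scons a e) P')); apply/andP; split; last exact: HP'.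
rewrite [word n e P]/word (Wsorted_sub PP').
have -> : word n.+1 (scons a e) P' = map (fun p => (p \in a) :: letter n e p) (Wsorted P').
  by rewrite /word; apply: eq_map => p; rewrite letter_scons.
rewrite /rrun (Wsorted_head zP' Hz).
have := @back_top D n e P eP a z (behead (Wsorted P')) zP.
rewrite -(Wsorted_head zP' Hz) /SS; apply.
by move=> q /mem_behead; rewrite mem_Wsorted in_fsetU => /orP[->|->].
Qed.

End ExRepr.

Fixpoint fv_t (t : wterm) : nat :=
  match t with
  | TVar v => v.+1
  | TBot | TC0 => 0
  | TCup t1 t2 | TCap t1 t2 | TIps t1 t2 => maxn (fv_t t1) (fv_t t2)
  | TMin t | TMax t => fv_t t
  end.

Fixpoint fv_f (f : wform) : nat :=
  match f with
  | FEq t1 t2 => maxn (fv_t t1) (fv_t t2)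
  | FNot g => fv_f g
  | FAnd g h | FOr g h | FImp g h => maxn (fv_f g) (fv_f h)
  | FEx g | FAll g => (fv_f g).-1
  end.

Section Terms.
Context {d : Order.disp_t} {I : orderType d} (z : I)
  (Hdense : forall x y : I, x < y -> exists w : I, x < w /\ w < y)
  (Hright : forall x : I, exists y : I, x < y)
  (Hz : forall x : I, z <= x).

Let Rex := Rep_ex Hdense Hright Hz.

Lemma andb_iff (b1 b2 : bool) (P1 P2 : Prop) : (b1 <-> P1) -> (b2 <-> P2) -> (b1 && b2 <-> P1 /\ P2).
Proof.
move=> H1 H2; split => [/andP[/H1 h1 /H2 h2] | [/H1 h1 /H2 h2]]; first by split.
by rewrite h1 h2.
Qed.
Lemma orb_iff (b1 b2 : bool) (P1 P2 : Prop) : (b1 <-> P1) -> (b2 <-> P2) -> (b1 || b2 <-> P1 \/ P2).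
Proof.
move=> H1 H2; split => [/orP[/H1 h|/H2 h] | [/H1 h|/H2 h]]; [by left|by right|by rewrite h|by rewrite h orbT].
Qed.
Lemma implb_iff (b1 b2 : bool) (P1 P2 : Prop) : (b1 <-> P1) -> (b2 <-> P2) -> (implb b1 b2 <-> (P1 -> P2)).
Proof.
move=> H1 H2; split => [/implyP h p1 | h]; first by apply/H2; apply: h; apply/H1.
by apply/implyP => /H1 p1; apply/H2; exact: h p1.
Qed.


Lemma term_bin (op : {fset I} -> {fset I} -> {fset I}) Dop t1 t2 n k (f : nat -> nat) :
  Rep z 3 Dop (fun e => e 0%N = op (e 1%N) (e 2%N)) ->
  (forall n k (f : nat -> nat), (k < n)%N -> (forall v, (v < fv_t t1)%N -> (f v < n)%N) ->
     exists D, Rep z n D (fun e => e k = teval z (fun v => e (f v)) t1)) ->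
  (forall n k (f : nat -> nat), (k < n)%N -> (forall v, (v < fv_t t2)%N -> (f v < n)%N) ->
     exists D, Rep z n D (fun e => e k = teval z (fun v => e (f v)) t2)) ->
  (k < n)%N -> (forall v, (v < maxn (fv_t t1) (fv_t t2))%N -> (f v < n)%N) ->
  exists D, Rep z n D (fun e => e k = op (teval z (fun v => e (f v)) t1) (teval z (fun v => e (f v)) t2)).
Proof.
move=> Hop IH1 IH2 kn fn.
have [D1 H1] := IH1 n.+2 1%N (fun v => (f v).+2) isT
   (fun v Hv => fn v (leq_trans Hv (leq_maxl _ _))).
have [D2 H2] := IH2 n.+2 0%N (fun v => (f v).+2) isT
   (fun v Hv => fn v (leq_trans Hv (leq_maxr _ _))).
have H3 := @Rep_relab _ _ z 3 n.+2 [:: k.+2; 1%N; 0%N] _ _ erefl ltac:(by rewrite /= !ltnS kn) Hop.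
have H12 := Rep_prod andb_iff H1 H2.
have H123 := Rep_prod andb_iff H12 H3.
have := Rex (Rex H123); move=> H; eexists; apply: (Rep_iff H) => e /=.
split.
  by move=> [a [b [[-> ->] ->]]].
by move=> ->; do 2 eexists.
Qed.

Lemma term_un (op : {fset I} -> {fset I}) Dop t1 n k (f : nat -> nat) :
  Rep z 3 Dop (fun e => e 0%N = op (e 1%N)) ->
  (forall n k (f : nat -> nat), (k < n)%N -> (forall v, (v < fv_t t1)%N -> (f v < n)%N) ->
     exists D, Rep z n D (fun e => e k = teval z (fun v => e (f v)) t1)) ->
  (k < n)%N -> (forall v, (v < fv_t t1)%N -> (f v < n)%N) ->
  exists D, Rep z n D (fun e => e k = op (teval z (fun v => e (f v)) t1)).
Proof.
move=> Hop IH1 kn fn.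
have [D1 H1] := IH1 n.+1 0%N (fun v => (f v).+1) isT fn.
have H3 := @Rep_relab _ _ z 3 n.+1 [:: k.+1; 0%N; 0%N] _ _ erefl ltac:(by rewrite /= !ltnS kn) Hop.
have H13 := Rep_prod andb_iff H1 H3.
have := Rex H13; move=> H; eexists; apply: (Rep_iff H) => e /=.
split; first by move=> [a [-> ->]].
by move=> ->; eexists.
Qed.

Lemma Rep_term t : forall n k (f : nat -> nat), (k < n)%N ->
  (forall v, (v < fv_t t)%N -> (f v < n)%N) ->
  exists D, Rep z n D (fun e => e k = teval z (fun v => e (f v)) t).
Proof.
elim: t => [v|||t1 IH1 t2 IH2|t1 IH1 t2 IH2|t1 IH1|t1 IH1|t1 IH1 t2 IH2] n k f kn fn /=.
- have H := @Rep_loc _ _ z (fun y _ => y) (fun Y _ => Y) erefl (fun _ _ _ => erefl).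
  have H' := @Rep_relab _ _ z 3 n [:: k; f v; k] _ _ erefl ltac:(by rewrite /= kn fn) H.
  by eexists; apply: (Rep_iff H') => e /=.
- have H := @Rep_loc _ _ z (fun _ _ => false) (fun _ _ => fset0) erefl (fun _ _ _ => erefl).
  have H' := @Rep_relab _ _ z 3 n [:: k; k; k] _ _ erefl ltac:(by rewrite /= kn) H.
  by eexists; apply: (Rep_iff H') => e /=.
- have H' := @Rep_relab _ _ z 3 n [:: k; k; k] _ _ erefl ltac:(by rewrite /= kn) (Rep_c0 Hz).
  by eexists; apply: (Rep_iff H') => e /=.
- apply: (term_bin _ IH1 IH2) => //.
  exact: (@Rep_loc _ _ z orb (fun Y Z => Y `|` Z) erefl (fun Y Z p => in_fsetU Y Z p)).
- apply: (term_bin _ IH1 IH2) => //.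
  exact: (@Rep_loc _ _ z andb (fun Y Z => Y `&` Z) erefl (fun Y Z p => in_fsetI Y Z p)).
- by apply: (term_un _ IH1) => //; exact: Rep_min.
- by apply: (term_un _ IH1) => //; exact: Rep_max.
- by apply: (term_bin _ IH1 IH2) => //; exact: Rep_ips.
Qed.

End Terms.

Section Forms.
Context {d : Order.disp_t} {I : orderType d} (z : I)
  (Hdense : forall x y : I, x < y -> exists w : I, x < w /\ w < y)
  (Hright : forall x : I, exists y : I, x < y)
  (Hz : forall x : I, z <= x).

Let Rex := Rep_ex Hdense Hright Hz.

Lemma Rep_form phi : forall n, (fv_f phi <= n)%N ->
  exists D, Rep z n D (fun e => holds z e phi).
Proof.
elim: phi => [t1 t2|g IHg|g IHg h IHh|g IHg h IHh|g IHg h IHh|g IHg|g IHg] n /= Hn.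
- have [D1 H1] := Rep_term Hdense Hright Hz (t := t1) (n := n.+1) (k := 0%N) (f := succn) isT
     (fun v Hv => leq_trans Hv (leq_trans (leq_maxl _ _) Hn)).
  have [D2 H2] := Rep_term Hdense Hright Hz (t := t2) (n := n.+1) (k := 0%N) (f := succn) isT
     (fun v Hv => leq_trans Hv (leq_trans (leq_maxr _ _) Hn)).
  have H := Rex (Rep_prod andb_iff H1 H2).
  eexists; apply: (Rep_iff H) => e /=; split; first by move=> [a [<- <-]].
  by move=> E; exists (teval z e t1); split.
- have [D1 H1] := IHg n Hn.
  by eexists; apply: (Rep_compl H1).
- have [D1 H1] := IHg n (leq_trans (leq_maxl _ _) Hn).
  have [D2 H2] := IHh n (leq_trans (leq_maxr _ _) Hn).
  by eexists; apply: (Rep_prod andb_iff H1 H2).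
- have [D1 H1] := IHg n (leq_trans (leq_maxl _ _) Hn).
  have [D2 H2] := IHh n (leq_trans (leq_maxr _ _) Hn).
  by eexists; apply: (Rep_prod orb_iff H1 H2).
- have [D1 H1] := IHg n (leq_trans (leq_maxl _ _) Hn).
  have [D2 H2] := IHh n (leq_trans (leq_maxr _ _) Hn).
  by eexists; apply: (Rep_prod implb_iff H1 H2).
- have Hn' : (fv_f g <= n.+1)%N by rewrite -ltnS in Hn; apply: leq_trans Hn; apply: leqSpred.
  have [D1 H1] := IHg n.+1 Hn'.
  by eexists; apply: (Rex H1).
- have Hn' : (fv_f g <= n.+1)%N by rewrite -ltnS in Hn; apply: leq_trans Hn; apply: leqSpred.
  have [D1 H1] := IHg n.+1 Hn'.
  have H := Rep_compl (Rex (Rep_compl H1)).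
  eexists; apply: (Rep_iff H) => e /=; split.
    move=> H0 a; apply: NNPP => Hna; apply: H0; by exists a.
  by move=> Ha [a]; apply.
Qed.

End Forms.

Definition FT := FEq TBot TBot.
Definition conj (fs : seq wform) := foldr FAnd FT fs.
Definition bigUt (ts : seq wterm) := foldr TCup TBot ts.

Fixpoint allw (k : nat) : seq (seq bool) :=
  if k is k'.+1 then [seq b :: w | b <- [:: true; false], w <- allw k'] else [:: [::]].

Lemma mem_allw k w : (w \in allw k) = (size w == k).
Proof.
elim: k w => [|k IH] w; first by case: w.
case: w => [|b w]; first by apply/allpairsP => -[[x y] [_ _ /=]].
apply/allpairsP/idP => [[[x y] /= [_ yk [Ex Ey]]]|H]; first by rewrite /= eqSS Ey -IH.
by exists (b, w); split => //=; [by case: (b)|by rewrite IH -eqSS].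
Qed.

Lemma pos_conj fs : pos_ex (conj fs) = all pos_ex fs.
Proof. by elim: fs => //= f fs ->. Qed.

Lemma pos_exn k f : pos_ex (iter k FEx f) = pos_ex f.
Proof. by elim: k => //= k ->. Qed.

Section Sem2.
Context {d : Order.disp_t} {I : orderType d} (z : I).

Lemma holds_conj_map (T : eqType) E (F : T -> wform) xs :
  holds z E (conj (map F xs)) <-> (forall x, x \in xs -> holds z E (F x)).
Proof.
elim: xs => [|x xs IH] /=; first by split.
rewrite IH; split => [[Hx Hxs] y|H]; first by rewrite in_cons => /orP[/eqP->|/Hxs].
by split; [apply: H; rewrite mem_head| move=> y yx; apply: H; rewrite in_cons yx orbT].
Qed.

Lemma mem_bigUt E ts p : (p \in teval z E (bigUt ts)) = has (fun t => p \in teval z E t) ts.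
Proof. by elim: ts => //= t ts IH; rewrite in_fsetU IH. Qed.

Definition prep (ws : seq {fset I}) (e : nat -> {fset I}) (j : nat) :=
  if (j < size ws)%N then nth fset0 ws j else e (j - size ws)%N.

Lemma prep_rcons ws a e : prep ws (scons a e) = prep (rcons ws a) e.
Proof.
apply: functional_extensionality => j; rewrite /prep size_rcons nth_rcons.
have [jl|jg|->] := ltngtP j (size ws).
- by rewrite ltnS ltnW.
- by rewrite ltnS leqNgt jg /= -(subnSK jg).
- by rewrite subnn ltnS leqnn /= ?eqxx.
Qed.

Lemma holds_exn E k f :
  holds z E (iter k FEx f) <-> exists ws, size ws = k /\ holds z (prep ws E) f.
Proof.
elim: k E => [|k IH] E /=.
  split => [H|[ws [/size0nil -> H]]]; last by move: H; congr (holds _ _ _); apply: functional_extensionality => j; rewrite /prep subn0.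
  by exists [::]; split => //; move: H; congr (holds _ _ _); apply: functional_extensionality => j; rewrite /prep subn0.
split => [[a /IH [ws [sw H]]]|[ws [sw H]]].
  by exists (rcons ws a); rewrite size_rcons sw -prep_rcons.
move: sw H; case/lastP: ws => // ws a; rewrite size_rcons => -[sw] H.
by exists a; apply/IH; exists ws; rewrite prep_rcons.
Qed.

End Sem2.

Section Pos.
Context {d : Order.disp_t} {I : orderType d}.
Implicit Types (P : {fset I}).

Lemma index_dec (pre u : seq I) p : uniq (pre ++ p :: u) -> index p (pre ++ p :: u) = size pre.
Proof.
rewrite cat_uniq => /and3P[_ /hasPn pn _].
rewrite index_cat /= eqxx addn0; case: ifP => // pp.
by have := pn p (mem_head _ _); rewrite pp.
Qed.

Lemma pos_succ P pre p p' u : pre ++ p :: p' :: u = Wsorted P ->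
  Whas_succ P p /\ Wsucc P p = p'.
Proof.
move=> E; have U := uniqW P; rewrite -E in U.
rewrite /Whas_succ /Wsucc -E index_dec // size_cat /= ltEnat /=; split; first by rewrite -addn2 leq_add2l. 
by rewrite nth_cat ltnNge leqnSn /= subSn // subnn.
Qed.

Lemma Wmax_rcons P s' x : Wsorted P = rcons s' x -> Wmax P = [fset x].
Proof. by rewrite /Wmax => ->; case: s' => [|y s'] //=; rewrite last_rcons. Qed.

Lemma max_last P pre p : rcons pre p = Wsorted P -> p \in Wmax P.
Proof. by move=> E; rewrite (Wmax_rcons (esym E)) in_fset1. Qed.

Lemma max_not P pre p p' u : pre ++ p :: p' :: u = Wsorted P -> p \notin Wmax P.
Proof.
move=> E; have U := uniqW P; rewrite -E in U.
case/lastP: u E U => [|u x] E U.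
  rewrite (Wmax_rcons (s' := pre ++ [:: p]) (x := p')) ?in_fset1; last by rewrite -E rcons_cat.
  apply/eqP => pp; move: U; rewrite cat_uniq /= => /and3P[_ _ /andP[]]; by rewrite pp mem_head.
rewrite (Wmax_rcons (s' := pre ++ p :: p' :: u) (x := x)) ?in_fset1; last by rewrite -E rcons_cat.
apply/eqP => px; move: U; rewrite cat_uniq /= => /and3P[_ _ /andP[]].
by rewrite px !in_cons mem_rcons mem_head !orbT.
Qed.

Lemma dec_mem (s : seq I) p : p \in s -> s = take (index p s) s ++ p :: drop (index p s).+1 s.
Proof.
move=> ps; have := cat_take_drop (index p s) s.
by rewrite (drop_nth p) ?index_mem // nth_index.
Qed.

Lemma in_Wips P (B : {fset I}) i : (i \in Wips P B) = [&& i \in P, Whas_succ P i & Wsucc P i \in B].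
Proof. by rewrite /Wips !inE. Qed.

End Pos.

Definition neqF (T : eqType) (F : T -> T -> wterm) (x y : T) :=
  if x == y then FT else FEq (F x y) TBot.

Section PE.
Variables (D : rdfa) (n : nat).

Definition Qs := enum (rst D).
Definition mQ := size Qs.
Definition LS := allw n.
Definition KK := (mQ + size LS)%N.
Definition Sv (q : rst D) := TVar (index q Qs).
Definition La (a : seq bool) := TVar (mQ + index a LS).
Definition Ov (i : nat) := TVar (KK + i).
Definition Uterm := TCup TC0 (bigUt (map Ov (iota 0 n))).

Definition body := conj [::
  conj (map (fun a => conj (map (neqF (fun a b => TCap (La a) (La b)) a) LS)) LS);
  FEq (bigUt (map La LS)) Uterm;
  conj (map (fun i => FEq (Ov i) (bigUt (map La (filter (fun a => nth false a i) LS)))) (iota 0 n));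
  conj (map (fun q => conj (map (neqF (fun q q' => TCap (Sv q) (Sv q')) q) Qs)) Qs);
  FEq (bigUt (map Sv Qs)) Uterm;
  FEq Uterm (TCup (TMax Uterm) (bigUt (map (fun a => bigUt (map (fun q' =>
       TCap (TCap (Sv (rstep D a q')) (La a)) (TIps Uterm (Sv q'))) Qs)) LS)));
  FEq (TMax Uterm) (TCap (TMax Uterm) (bigUt (map (fun a => TCap (Sv (rstep D a (rs0 D))) (La a)) LS)));
  FEq TC0 (TCap TC0 (bigUt (map Sv (filter (racc D) Qs))))].

Definition peform := iter KK FEx body.

Lemma pos_neqF (T : eqType) (F : T -> T -> wterm) x y : pos_ex (neqF F x y).
Proof. by rewrite /neqF; case: eqP. Qed.

Lemma pos_peform : pos_ex peform.
Proof.
rewrite /peform pos_exn /body /= !pos_conj !all_map /= !andbT.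
apply/and3P; split.
- by apply/allP => a _ /=; rewrite pos_conj all_map; apply/allP => b _ /=; rewrite pos_neqF.
- by apply/allP => i _.
- by apply/allP => a _ /=; rewrite pos_conj all_map; apply/allP => b _ /=; rewrite pos_neqF.
Qed.

Context {d : Order.disp_t} {I : orderType d} (z : I) (Hz : forall x : I, z <= x).
Variable e : nat -> {fset I}.

Definition P0 := teval z e (TCup TC0 (bigUt (map TVar (iota 0 n)))).

Lemma mem_P0 p : (p \in P0) = (p == z) || has (fun i => p \in e i) (iota 0 n).
Proof. by rewrite /P0 /= in_fsetU in_fset1 mem_bigUt has_map. Qed.

Lemma zP0 : z \in P0.
Proof. by rewrite mem_P0 eqxx. Qed.

Lemma eP0 i : (i < n)%N -> e i `<=` P0.
Proof.
move=> iN; apply/fsubsetP => p pe; rewrite mem_P0; apply/orP; right.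
by apply/hasP; exists i; rewrite // mem_iota.
Qed.

Section WS.
Variable ws : seq {fset I}.
Hypothesis sw : size ws = KK.
Definition Sset q := nth fset0 ws (index q Qs).
Definition Lset a := nth fset0 ws (mQ + index a LS).

Lemma evS q : teval z (prep ws e) (Sv q) = Sset q.
Proof. by rewrite /= /prep sw /KK ltn_addr // index_mem mem_enum. Qed.

Lemma evL a : a \in LS -> teval z (prep ws e) (La a) = Lset a.
Proof. by move=> aL; rewrite /= /prep sw /KK ltn_add2l index_mem aL. Qed.

Lemma evO i : teval z (prep ws e) (Ov i) = e i.
Proof. by rewrite /= /prep sw ltnNge leq_addr /= addKn. Qed.

Lemma evU : teval z (prep ws e) Uterm = P0.
Proof.
apply/fsetP => p; rewrite /Uterm /P0 /= !in_fsetU !mem_bigUt !has_map; congr orb.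
by apply: eq_has => i; rewrite /preim /= /prep sw ltnNge leq_addr /= addKn.
Qed.

Lemma size_letter p : size (letter n e p) = n.
Proof. by rewrite size_map size_iota. Qed.

Lemma nth_letter p i : (i < n)%N -> nth false (letter n e p) i = (p \in e i).
Proof. by move=> iN; rewrite (nth_map 0%N) ?size_iota // nth_iota. Qed.

Lemma letter_LS p : letter n e p \in LS.
Proof. by rewrite /LS mem_allw size_letter. Qed.

Section Sound.
Local Arguments teval : simpl never.
Let tv_cap E a b : teval z E (TCap a b) = teval z E a `&` teval z E b. Proof. by []. Qed.
Let tv_cup E a b : teval z E (TCup a b) = teval z E a `|` teval z E b. Proof. by []. Qed.
Let tv_max E a : teval z E (TMax a) = Wmax (teval z E a). Proof. by []. Qed.
Let tv_ips E a b : teval z E (TIps a b) = Wips (teval z E a) (teval z E b). Proof. by []. Qed.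
Let tv_c0 E : teval z E TC0 = [fset z]. Proof. by []. Qed.
Let tv_bot E : teval z E TBot = fset0. Proof. by []. Qed.

Lemma pe_sound : holds z (prep ws e) body -> rA D (word n e P0).
Proof.
move=> [H1 [H2 [H3 [H4 [H5 [H6 [H7 [H8 _]]]]]]]].
have F1 : forall a b p, a \in LS -> b \in LS -> p \in Lset a -> p \in Lset b -> a = b.
  move=> a b p aL bL pa pb; apply/eqP; apply: contraT => ab.
  move/holds_conj_map: H1 => /(_ a aL) /holds_conj_map /(_ b bL).
  rewrite /neqF (negbTE ab) => /fsetP /(_ p).
  by rewrite tv_cap tv_bot in_fsetI !evL // pa pb in_fset0.
have F4 : forall q q' p, p \in Sset q -> p \in Sset q' -> q = q'.
  move=> q q' p pq pq'; apply/eqP; apply: contraT => qq.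
  move/holds_conj_map: H4 => /(_ q (mem_enum _ _)) /holds_conj_map /(_ q' (mem_enum _ _)).
  rewrite /neqF (negbTE qq) => /fsetP /(_ p).
  by rewrite tv_cap tv_bot in_fsetI !evS pq pq' in_fset0.
have F3 : forall i p, (i < n)%N ->
    (p \in e i) = has (fun t => p \in teval z (prep ws e) t) (map La (filter (fun a => nth false a i) LS)).
  move=> i p iN; move/holds_conj_map: H3 => /(_ i); rewrite mem_iota add0n iN => /(_ isT) /fsetP /(_ p).
  by rewrite evO mem_bigUt.
have Llab : forall p a, a \in LS -> p \in Lset a -> a = letter n e p.
  move=> p a aL pa; have sa : size a = n by move: aL; rewrite /LS mem_allw => /eqP.
  apply: (@eq_from_nth _ false); first by rewrite size_letter.
  move=> i; rewrite sa => iN; rewrite nth_letter // F3 //.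
  rewrite has_map; apply/idP/hasP => [ai|[b]].
    by exists a; [rewrite mem_filter ai aL | rewrite /preim /= evL].
  rewrite mem_filter => /andP[bi bL]; rewrite /preim /= evL // => pb.
  by rewrite (F1 a b p aL bL pa pb).
have Suf : forall u pre, pre ++ u = Wsorted P0 -> forall p u' q, u = p :: u' ->
    p \in Sset q -> q = rrun D (map (letter n e) u).
  elim=> // p u' IH pre Es p0 u0 q [E1 E2]; subst p0 u0 => pq.
  have pP : p \in P0 by rewrite -mem_Wsorted -Es mem_cat mem_head orbT.
  case: u' IH Es => [|p' u''] IH Es.
    have pM : p \in Wmax P0 by apply: (max_last (pre := pre)); rewrite -cats1.
    move: H7 => /fsetP /(_ p); rewrite tv_cap !tv_max evU in_fsetI pM /= mem_bigUt.
    rewrite has_map => /esym /hasP [a aL]; rewrite /preim /=.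
    rewrite tv_cap evS evL // in_fsetI => /andP [pq' pa].
    by rewrite /rrun /= -(Llab p a aL pa); exact: F4 pq pq'.
  have [hs ws'] := pos_succ Es.
  have pM : p \notin Wmax P0 := max_not Es.
  move: H6 => /fsetP /(_ p); rewrite evU pP tv_cup tv_max evU in_fsetU (negbTE pM) /= mem_bigUt.
  rewrite has_map => /esym /hasP [a aL]; rewrite /preim /=.
  rewrite mem_bigUt has_map => /hasP [q' _]; rewrite /preim /=.
  rewrite !tv_cap tv_ips evU !in_fsetI evS evL // evS => /andP[/andP[pq1 pa] pips].
  move: pips; rewrite in_Wips ws' => /and3P [_ _ p'q'].
  have Eq' : q' = rrun D (map (letter n e) (p' :: u'')).
    by apply: (IH (rcons pre p)) => //; rewrite cat_rcons.
  by rewrite (F4 _ _ _ pq pq1) -(Llab p a aL pa) Eq'.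
rewrite /rA /word.
move: H8 => /fsetP /(_ z); rewrite tv_cap tv_c0 in_fsetI in_fset1 eqxx /= mem_bigUt has_map.
move=> /esym /hasP [q]; rewrite mem_filter /preim /= evS => /andP [qacc _] zq.
have := Suf (Wsorted P0) [::] erefl z (behead (Wsorted P0)) q (Wsorted_head zP0 Hz) zq.
by move=> E; rewrite -E.
Qed.

End Sound.

End WS.

Section Complete.
Local Arguments teval : simpl never.
Let tv_cap E a b : teval z E (TCap a b) = teval z E a `&` teval z E b. Proof. by []. Qed.
Let tv_cup E a b : teval z E (TCup a b) = teval z E a `|` teval z E b. Proof. by []. Qed.
Let tv_max E a : teval z E (TMax a) = Wmax (teval z E a). Proof. by []. Qed.
Let tv_ips E a b : teval z E (TIps a b) = Wips (teval z E a) (teval z E b). Proof. by []. Qed.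
Let tv_c0 E : teval z E TC0 = [fset z]. Proof. by []. Qed.
Let tv_bot E : teval z E TBot = fset0. Proof. by []. Qed.

Definition sP := Wsorted P0.
Definition suf p := rrun D (map (letter n e) (drop (index p sP) sP)).
Definition S0 q : {fset I} := [fset p in sP | suf p == q].
Definition L0 a : {fset I} := [fset p in sP | letter n e p == a].
Definition wsc := map S0 Qs ++ map L0 LS.

Lemma in_S0 p q : (p \in S0 q) = (p \in sP) && (suf p == q).
Proof. by rewrite /S0 !inE. Qed.
Lemma in_L0 p a : (p \in L0 a) = (p \in sP) && (letter n e p == a).
Proof. by rewrite /L0 !inE. Qed.

Lemma size_wsc : size wsc = KK.
Proof. by rewrite /wsc /KK /mQ size_cat !size_map. Qed.

Lemma Sset_wsc q : Sset wsc q = S0 q.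
Proof.
rewrite /Sset /wsc nth_cat size_map index_mem mem_enum (nth_map q) ?index_mem ?mem_enum //.
by rewrite nth_index ?mem_enum.
Qed.

Lemma Lset_wsc a : a \in LS -> Lset wsc a = L0 a.
Proof.
move=> aL; rewrite /Lset /wsc nth_cat size_map /mQ ltnNge leq_addr /= addKn.
by rewrite (nth_map a) ?index_mem // nth_index.
Qed.

Lemma suf_dec pre p u : pre ++ p :: u = sP -> suf p = rrun D (map (letter n e) (p :: u)).
Proof.
move=> E; rewrite /suf -E index_dec ?drop_size_cat //.
by rewrite E; exact: uniqW.
Qed.

Lemma Wmax_sub (P : {fset I}) p : p \in Wmax P -> p \in P.
Proof.
move=> H; rewrite -mem_Wsorted; move: H; rewrite /Wmax; case: (Wsorted P) => [|x l] //=.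
by rewrite in_fset1 => /eqP ->; rewrite mem_last.
Qed.

Lemma pe_complete : rA D (word n e P0) -> holds z (prep wsc e) body.
Proof.
move=> HA.
have sw := size_wsc.
have sP0 : forall p, (p \in sP) = (p \in P0) by move=> p; rewrite mem_Wsorted.
split.
  apply/holds_conj_map => a aL; apply/holds_conj_map => b bL; rewrite /neqF.
  case: eqP => [//|ab]; apply/fsetP => p.
  rewrite tv_cap tv_bot in_fsetI !evL // !Lset_wsc // in_fset0 !in_L0.
  by apply/negbTE/negP => /andP[/andP[_ /eqP E1] /andP [_ /eqP E2]]; apply: ab; rewrite -E1 -E2.
split.
  apply/fsetP => p; rewrite evU // mem_bigUt has_map -sP0; apply/hasP/idP => [[a aL]|pP].
    by rewrite /preim /= evL // Lset_wsc // in_L0 => /andP[].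
  by exists (letter n e p); rewrite ?letter_LS // /preim /= evL ?letter_LS // Lset_wsc ?letter_LS // in_L0 pP eqxx.
split.
  apply/holds_conj_map => i; rewrite mem_iota add0n => iN; apply/fsetP => p.
  rewrite evO // mem_bigUt has_map; apply/idP/hasP => [pe|[a]].
    exists (letter n e p); first by rewrite mem_filter nth_letter // pe letter_LS.
    by rewrite /preim /= evL ?letter_LS // Lset_wsc ?letter_LS // in_L0 sP0 (fsubsetP (eP0 iN)) ?eqxx.
  rewrite mem_filter => /andP[ai aL]; rewrite /preim /= evL // Lset_wsc // in_L0 => /andP[_ /eqP E1].
  by rewrite -nth_letter // E1.
split.
  apply/holds_conj_map => a _; apply/holds_conj_map => b _; rewrite /neqF.
  case: eqP => [//|ab]; apply/fsetP => p.
  rewrite tv_cap tv_bot in_fsetI !evS // !Sset_wsc in_fset0 !in_S0.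
  by apply/negbTE/negP => /andP[/andP[_ /eqP E1] /andP [_ /eqP E2]]; apply: ab; rewrite -E1 -E2.
split.
  apply/fsetP => p; rewrite evU // mem_bigUt has_map -sP0; apply/hasP/idP => [[q _]|pP].
    by rewrite /preim /= evS // Sset_wsc in_S0 => /andP[].
  by exists (suf p); rewrite ?mem_enum // /preim /= evS // Sset_wsc in_S0 pP eqxx.
split.
  apply/fsetP => p; rewrite tv_cup tv_max evU // in_fsetU mem_bigUt has_map.
  apply/idP/orP => [pP|[/Wmax_sub //|/hasP [a aL]]]; last first.
    rewrite /preim /= mem_bigUt has_map => /hasP [q' _]; rewrite /preim /= !tv_cap !in_fsetI evS //.
    by rewrite Sset_wsc in_S0 sP0 => /andP[/andP[/andP[]]].
  have pS : p \in sP by rewrite sP0.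
  have Es := esym (dec_mem pS).
  case E: (drop (index p sP).+1 sP) Es => [|p' u] Es.
    by left; apply: (max_last (pre := take (index p sP) sP)); rewrite -cats1.
  right; apply/hasP; exists (letter n e p); first exact: letter_LS.
  rewrite /preim /= mem_bigUt has_map; apply/hasP; exists (suf p'); first exact: mem_enum.
  have [hs ws'] := pos_succ Es.
  have Es' : rcons (take (index p sP) sP) p ++ p' :: u = sP by rewrite cat_rcons.
  rewrite /preim /= !tv_cap tv_ips evU // !in_fsetI !evS // evL ?letter_LS // !Sset_wsc Lset_wsc ?letter_LS //.
  rewrite !in_S0 in_L0 pS eqxx in_Wips -sP0 pS hs ws' /= in_S0 eqxx andbT.
  rewrite (suf_dec Es) (suf_dec Es') /= eqxx /=.
  by rewrite andbT -Es mem_cat !in_cons eqxx !orbT.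
split.
  apply/fsetP => p; rewrite tv_cap tv_max evU // in_fsetI.
  case pM: (p \in Wmax P0) => //=; symmetry.
  rewrite mem_bigUt has_map; apply/hasP; exists (letter n e p); first exact: letter_LS.
  have pS : p \in sP by rewrite sP0; apply: Wmax_sub.
  case/lastP E: sP pS => [|s' x] //= pS.
  move: pM; rewrite (Wmax_rcons E) in_fset1 => /eqP px; subst x.
  rewrite /preim /= tv_cap in_fsetI evS // evL ?letter_LS // Sset_wsc Lset_wsc ?letter_LS //.
  rewrite in_S0 in_L0 E pS eqxx andbT (suf_dec (pre := s') (u := [::])) ?E ?cats1 // /= eqxx.
split.
  split.
  apply/fsetP => p; rewrite tv_cap tv_c0 in_fsetI in_fset1.
  case: eqP => [->|] //=; symmetry.
  rewrite mem_bigUt has_map; apply/hasP; exists (suf z).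
    rewrite mem_filter mem_enum andbT (suf_dec (pre := [::]) (u := behead sP)).
      by rewrite /sP -(Wsorted_head zP0 Hz).
    by rewrite /sP -(Wsorted_head zP0 Hz).
  by rewrite /preim /= evS // Sset_wsc in_S0 sP0 zP0 eqxx.
by [].
Qed.

End Complete.
End PE.

Unset Implicit Arguments.

Theorem theorem3p6 (d : Order.disp_t) (I : orderType d) (z : I) :
  dense_lo_left0_noright z ->
  forall phi : wform, exists psi : wform,
    pos_ex psi /\
    (forall e : nat -> {fset I}, holds z e phi <-> holds z e psi).
Proof.
case=> Hz Hdense Hright phi.
have [D HD] := Rep_form Hdense Hright Hz (phi := phi) (n := fv_f phi) (leqnn _).
exists (peform D (fv_f phi)); split; first exact: pos_peform.
move=> e.
rewrite -(HD e (P0 (fv_f phi) z e) (zP0 _ _ _) (fun i Hi => eP0 z e Hi)).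
split.
  move=> H; apply/holds_exn; exists (wsc D (fv_f phi) z e); split; first exact: size_wsc.
  exact: pe_complete.
by move/holds_exn => [ws [sw H]]; apply: (pe_sound Hz sw H).
Qed.
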